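(* Every complete multipartite graph with at least two nonempty parts admits an antimagic orientation.
   Context: A complete multipartite graph is a simple graph whose vertex set is partitioned into parts such that two vertices are adjacent if and only if they lie in different parts. For a digraph $D$ and an injective map $\tau$ from the arc set $A(D)$ to positive integers, $s_{(D,\tau)}(u)$ is the sum of labels of arcs entering $u$ minus the sum of labels of arcs leaving $u$ ($0$ if $u$ is isolated). If $D$ has $m$ arcs, a bijection $\tau:A(D)\to\{1,\dots,m\}$ is an antimagic labeling if the values $s_{(D,\tau)}(u)$ are pairwise distinct over all vertices. A graph admits an antimagic orientation if some orientation $D$ of it has an antimagic labeling. *)

(* Defs.v *)
From mathcomp Require Import all_boot all_order all_algebra.
Set Implicit Arguments. Unset Strict Implicit. Unset Printing Implicit Defensive.
Import Order.TTheory GRing.Theory Num.Theory.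

Definition cmp_adj (V P : finType) (part : V -> P) : rel V :=
  fun u v => part u != part v.

Definition is_orientation (V : finType) (adj : rel V) (arc : rel V) : Prop :=
  (forall u v, arc u v -> adj u v) /\
  (forall u v, adj u v -> (arc u v (+) arc v u)).

Definition arcs (V : finType) (arc : rel V) : {set V * V} :=
  [set e | arc e.1 e.2].

Definition vsum (V : finType) (arc : rel V) (tau : V * V -> nat) (u : V) : int :=
  (\sum_(e in arcs arc | e.2 == u) (tau e)%:Z
   - \sum_(e in arcs arc | e.1 == u) (tau e)%:Z)%R.

Definition is_labeling (V : finType) (arc : rel V) (tau : V * V -> nat) : Prop :=
  {in arcs arc &, injective tau} /\
  (forall e, e \in arcs arc -> 1 <= tau e <= #|arcs arc|).

Definition antimagic_labeling (V : finType) (arc : rel V) (tau : V * V -> nat) : Prop :=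
  is_labeling arc tau /\ injective (vsum arc tau).

Definition has_antimagic_orientation (V : finType) (adj : rel V) : Prop :=
  exists (arc : rel V) (tau : V * V -> nat),
    is_orientation adj arc /\ antimagic_labeling arc tau.

(* Main.v *)
Require Import Defs.
From mathcomp Require Import all_boot all_order all_algebra.
From mathcomp Require Import zify.
Set Implicit Arguments. Unset Strict Implicit. Unset Printing Implicit Defensive.

Lemma sum_ltn_pt (T : finType) (f g : T -> nat) (z : T) :
  (forall x, f x <= g x) -> f z < g z -> \sum_x f x < \sum_x g x.
Proof.
move=> fg fz; rewrite (bigD1 z) //= [X in _ < X](bigD1 z) //=.
rewrite -addSn leq_add //; exact: leq_sum.
Qed.

Section Pf.
Variables (V P : finType) (part : V -> P).

Definition pr (x : V) : nat := enum_rank (part x).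
Definition vr (x : V) : nat := enum_rank x.
Definition K (x : V) : nat := pr x * #|V| + vr x.
Definition C : nat := #|P| * #|V|.
Definition W (e : V * V) : nat := (C - K e.1) * C + K e.2.
Definition arc : rel V := fun u v => pr u < pr v.
Definition tau (e : V * V) : nat := #|[set e' in arcs arc | W e' <= W e]|.

Lemma pr_lt x : pr x < #|P|.
Proof. by rewrite /pr ltn_ord. Qed.
Lemma vr_lt x : vr x < #|V|.
Proof. by rewrite /vr ltn_ord. Qed.
Lemma K_lt x : K x < C.
Proof. have := pr_lt x; have := vr_lt x; rewrite /K /C; nia. Qed.

Lemma K_inj x y : K x = K y -> x = y.
Proof.
move=> h; have hx := vr_lt x; have hy := vr_lt y.
have : vr x = vr y.
  move: h; rewrite /K => h.
  have [lt|gt|//] := ltngtP (pr x) (pr y); nia.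
by move/val_inj/enum_rank_inj.
Qed.

Lemma W_inj e e' : W e = W e' -> e = e'.
Proof.
case: e e' => a b [a' b'] /=; rewrite /W /= => h.
have ha := K_lt a; have hb := K_lt b; have ha' := K_lt a'; have hb' := K_lt b'.
have e1 : C - K a = C - K a'.
  have [lt|gt|//] := ltngtP (C - K a) (C - K a'); nia.
have e2 : K b = K b' by nia.
have e3 : K a = K a' by lia.
by rewrite (K_inj e3) (K_inj e2).
Qed.

Lemma W_in u x y : K x < K y -> W (u, x) < W (u, y).
Proof. by rewrite /W /= ltn_add2l. Qed.

Lemma W_out w x y : K x < K y -> W (y, w) < W (x, w).
Proof.
move=> h; rewrite /W /=; have := K_lt w; have := K_lt y; nia.
Qed.

Lemma tau_mono e e' : e' \in arcs arc -> W e < W e' -> tau e < tau e'.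
Proof.
move=> he' lt; apply: proper_card; apply/properP; split.
  apply/subsetP => f; rewrite !inE => /andP[-> /leq_trans]; apply; exact: ltnW.
idtac.
exists e'; first by rewrite inE he' leqnn.
by rewrite inE he' /= -ltnNge.
Qed.

Lemma tau_pos e : e \in arcs arc -> 0 < tau e.
Proof. by move=> he; apply/card_gt0P; exists e; rewrite inE he leqnn. Qed.

Lemma tau_le e : tau e <= #|arcs arc|.
Proof. by apply: subset_leq_card; apply/subsetP => f; rewrite inE => /andP[]. Qed.

Lemma arcsE u v : ((u, v) \in arcs arc) = (pr u < pr v).
Proof. by rewrite inE. Qed.

Lemma sum_head (f : V * V -> nat) y :
  \sum_(e in arcs arc | e.2 == y) f e = \sum_u (if pr u < pr y then f (u, y) else 0).
Proof.
rewrite big_mkcond /=.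
transitivity (\sum_u \sum_v (if (pr u < pr v) && (v == y) then f (u, v) else 0)).
  rewrite pair_big /=; apply: eq_bigr => -[a b] _ /=; by rewrite inE.
apply: eq_bigr => u _; rewrite (bigD1 y) //= eqxx andbT big1 ?addn0 // => v /negbTE ->.
by rewrite andbF.
Qed.

Lemma sum_tail (f : V * V -> nat) x :
  \sum_(e in arcs arc | e.1 == x) f e = \sum_w (if pr x < pr w then f (x, w) else 0).
Proof.
rewrite big_mkcond /=.
transitivity (\sum_a \sum_b (if (pr a < pr b) && (a == x) then f (a, b) else 0)).
  rewrite pair_big /=; apply: eq_bigr => -[a b] _ /=; by rewrite inE.
rewrite (bigD1 x) //= [X in _ + X]big1 ?addn0; last first.
  by move=> a ha; apply: big1 => b _; rewrite (negbTE ha) andbF.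
by apply: eq_bigr => w _; rewrite eqxx andbT.
Qed.

Lemma vsumE x : vsum arc tau x =
  (Posz (\sum_u (if pr u < pr x then tau (u, x) else 0)) -
   Posz (\sum_w (if pr x < pr w then tau (x, w) else 0)))%R.
Proof.
rewrite /vsum -sum_head -sum_tail.
by rewrite !(big_morph Posz PoszD (erefl (Posz 0))).
Qed.

Definition In x := \sum_u (if pr u < pr x then tau (u, x) else 0).
Definition Out x := \sum_w (if pr x < pr w then tau (x, w) else 0).

Lemma pr_le x y : K x < K y -> pr x <= pr y.
Proof.
rewrite /K => h; have h1 := vr_lt x; have h2 := vr_lt y.
case: (leqP (pr x) (pr y)) => // h3; nia.
Qed.

Lemma pr_eq_part a b : pr a = pr b -> part a = part b.
Proof. by move/val_inj/enum_rank_inj. Qed.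

Lemma mono (ex : exists u v : V, part u != part v) x y : K x < K y ->
  [/\ In x <= In y, Out y <= Out x & (In x < In y) || (Out y < Out x)].
Proof.
move=> hK; have hp := pr_le hK.
have ptI : forall u, (if pr u < pr x then tau (u, x) else 0) <=
                     (if pr u < pr y then tau (u, y) else 0).
  move=> u; case: ifP => // hu; rewrite (leq_trans hu hp) ltnW //.
  by apply: tau_mono; [rewrite arcsE (leq_trans hu hp) | exact: W_in].
have ptO : forall w, (if pr y < pr w then tau (y, w) else 0) <=
                     (if pr x < pr w then tau (x, w) else 0).
  move=> w; case: ifP => // hw; rewrite (leq_ltn_trans hp hw) ltnW //.
  by apply: tau_mono; [rewrite arcsE (leq_ltn_trans hp hw) | exact: W_out].
split; [exact: leq_sum | exact: leq_sum |].
case: (ltngtP (pr x) (pr y)) => hxy.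
- apply/orP; left; apply: (@sum_ltn_pt _ _ _ x ptI) => /=.
  by rewrite ltnn hxy; apply: tau_pos; rewrite arcsE.
- by move: hp; rewrite leqNgt hxy.
have [z hz] : exists z, part z != part x.
  case: ex => u [v huv]; case: (eqVneq (part u) (part x)) => hu.
    by exists v; rewrite -hu eq_sym.
  by exists u.
have hz' : pr z != pr x by apply/contra: hz => /eqP /pr_eq_part ->.
case: (ltngtP (pr z) (pr x)) hz' => // hzx _.
- apply/orP; left; apply: (@sum_ltn_pt _ _ _ z ptI) => /=.
  rewrite hzx -hxy hzx; apply: tau_mono; first by rewrite arcsE -hxy.
  exact: W_in.
- apply/orP; right; apply: (@sum_ltn_pt _ _ _ z ptO) => /=.
  rewrite hzx -hxy hzx; apply: tau_mono; first by rewrite arcsE.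
  exact: W_out.
Qed.
End Pf.

Theorem mainTheorem5 (V P : finType) (part : V -> P) :
  (exists u v : V, part u != part v) ->
  has_antimagic_orientation (cmp_adj part).
Proof.
move=> ex; exists (arc part), (tau part); split.
  split.
    move=> u v; rewrite /arc /cmp_adj => h; apply/negP => /eqP e.
    by rewrite /pr e ltnn in h.
  move=> u v; rewrite /cmp_adj => h.
  have : pr part u != pr part v by apply: contra h => /eqP/pr_eq_part ->.
  by rewrite /arc; case: ltngtP.
split; first split.
- move=> e e' he he' h; apply: (@W_inj _ _ part).
  case: (ltngtP (W part e) (W part e')) => // lt.
    by have := tau_mono he' lt; rewrite h ltnn.
  by have := tau_mono he lt; rewrite h ltnn.
- by move=> e he; rewrite (tau_pos he) (tau_le part e).
move=> x y; rewrite !vsumE => h.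
case: (ltngtP (K part x) (K part y)) => [lt|gt|e]; last exact: K_inj e.
  have [] := mono ex lt; rewrite /In /Out; lia.
have [] := mono ex gt; rewrite /In /Out; lia.
Qed.
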